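(* Let $p\ge2$ be a fixed integer, and let $\lambda=[a_0,a_1,\ldots]_p$ and $\mu=[b_0,b_1,\ldots]_p$ be partitions in $\mathcal P$. Fix an index $i$ and let $m=\min\{a_i,b_i\}$. Let $\tilde\lambda$ be obtained from $\lambda$ by replacing $a_i$ with $a_i-m$, and $\tilde\mu$ be obtained from $\mu$ by replacing $b_i$ with $b_i-m$ (i.e. removing $m$ entries equal to $p^i$ from each). Then $\lambda$ stably embeds into $\mu$ if and only if $\tilde\lambda$ stably embeds into $\tilde\mu$.
   Context: $\mathcal P$ is the set of integral partitions (finite nonincreasing sequences of positive integers) all of whose entries are powers $p^k$, $k\ge0$. The notation $[a_0,a_1,\ldots,a_s]_p$ denotes the partition in $\mathcal P$ having exactly $a_k$ entries equal to $p^k$ for each $k$. The empty partition is allowed and embeds into every partition. The product $\lambda\times\nu$ is the partition of all products $\lambda_i\nu_j$, reordered nonincreasingly. $\lambda=[\lambda_1,\ldots,\lambda_m]$ embeds into $\mu=[\mu_1,\ldots,\mu_n]$, written $\lambda\hookrightarrow\mu$, if there is a map $\varphi:\{1,\ldots,m\}\to\{1,\ldots,n\}$ with $\sum_{i\in\varphi^{-1}(j)}\lambda_i\le\mu_j$ for all $j$. $\lambda$ stably embeds into $\mu$ if there is an integral partition $\nu$ with $\lambda\times\nu\hookrightarrow\mu\times\nu$. *)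

(* Defs.v *)
From mathcomp Require Import all_boot.
Set Implicit Arguments. Unset Strict Implicit. Unset Printing Implicit Defensive.

Definition is_partition (l : seq nat) : bool :=
  sorted geq l && all (fun x => 0 < x) l.

Definition ppart (p : nat) (a : seq nat) : seq nat :=
  sort geq (flatten [seq nseq (nth 0 a k) (p ^ k) | k <- iota 0 (size a)]).

Definition pprod (l n : seq nat) : seq nat :=
  sort geq [seq x * y | x <- l, y <- n].

Definition embeds (l m : seq nat) : Prop :=
  exists phi : 'I_(size l) -> 'I_(size m),
    forall j : 'I_(size m), \sum_(i | phi i == j) nth 0 l i <= nth 0 m j.

Definition stably_embeds (l m : seq nat) : Prop :=
  exists nu : seq nat, [/\ is_partition nu, nu != [::] & embeds (pprod l nu) (pprod m nu)].

(* Main.v *)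
Require Import Defs.
From mathcomp Require Import all_boot zify.
From Stdlib Require Import Lia.
Set Implicit Arguments. Unset Strict Implicit. Unset Printing Implicit Defensive.

Definition S (T : nat) (s : seq nat) : nat := \sum_(x <- s | T <= x) x.

Lemma S_perm T s t : perm_eq s t -> S T s = S T t.
Proof. by move=> H; rewrite /S (perm_big _ H). Qed.

Lemma S_cat T s t : S T (s ++ t) = S T s + S T t.
Proof. by rewrite /S big_cat. Qed.

Lemma S_cons T x s : S T (x :: s) = (if T <= x then x else 0) + S T s.
Proof. by rewrite /S big_cons; case: ifP. Qed.

Lemma sum_nseq (G : nat -> nat) c z : \sum_(x <- nseq c z) G x = c * G z.
Proof. by rewrite big_nseq iter_addn_0 mulnC. Qed.

Lemma S_pprod T l n :
  S T (pprod l n) = \sum_(x <- l) \sum_(y <- n | T <= x * y) x * y.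
Proof.
rewrite /S /pprod (perm_big _ (permEl (perm_sort _ _))) big_mkcond big_allpairs_dep.
by apply: eq_bigr => x _; rewrite [RHS]big_mkcond.
Qed.

Lemma sum_ppart p a (G : nat -> nat) :
  \sum_(x <- ppart p a) G x = \sum_(k < size a) nth 0 a k * G (p ^ k).
Proof.
rewrite /ppart (perm_big _ (permEl (perm_sort _ _))) big_flatten big_map.
have -> : iota 0 (size a) = index_iota 0 (size a) by rewrite /index_iota subn0.
rewrite big_mkord.
by apply: eq_bigr => k _; rewrite sum_nseq.
Qed.

Lemma embeds_S l m T : embeds l m -> S T l <= S T m.
Proof.
case=> phi H.
rewrite /S (big_nth 0) big_mkord.
rewrite (partition_big phi xpredT) //.
rewrite [X in _ <= X](big_nth 0) big_mkord [X in _ <= X]big_mkcond /=.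
apply: leq_sum => j _.
case: ifP => Hj.
  apply: leq_trans (H j); rewrite [X in _ <= X]big_mkcond [X in X <= _]big_mkcond.
  apply: leq_sum => i _; case: ifP => //; case/andP=> _ ->; done.
rewrite leqn0 sum_nat_eq0; apply/forallP => i; apply/implyP => /andP [Ti /eqP Pi].
exfalso; move/negbT: Hj; rewrite -ltnNge => Hj.
have : nth 0 l i <= nth 0 m j.
  apply: leq_trans (H j); rewrite (bigD1 i) ?Pi //= leq_addr //.
by move=> Hle; move: (leq_trans Ti Hle); rewrite leqNgt Hj.
Qed.

Definition embN (l m : seq nat) : Prop :=
  exists f : nat -> nat, (forall i, i < size l -> f i < size m) /\
    (forall j, j < size m -> \sum_(i < size l | f i == j) nth 0 l i <= nth 0 m j).

Lemma embN_embeds l m : embN l m -> embeds l m.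
Proof.
case=> f [Hf H].
exists (fun i : 'I_(size l) => Ordinal (Hf i (ltn_ord i))) => j.
apply: leq_trans (H j (ltn_ord j)).
by rewrite leq_eqVlt; apply/orP; left; apply/eqP; apply: eq_bigl => i.
Qed.

Lemma embN_perml l l' m : embN l m -> perm_eq l l' -> embN l' m.
Proof.
case=> f [Hf H] ; rewrite perm_sym => /(perm_iotaP 0) [Is HIs El'].
have sIs : size Is = size l' by rewrite El' size_map.
have inIs k : k \in Is -> k < size l by rewrite (perm_mem HIs) mem_iota add0n.
exists (fun i => f (nth 0 Is i)); split.
  by move=> i Hi; apply/Hf/inIs; rewrite mem_nth // sIs.
move=> j Hj; apply: leq_trans (H j Hj).
rewrite -(big_mkord (fun i => f (nth 0 Is i) == j) (fun i => nth 0 l' i)).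
rewrite -(big_mkord (fun i => f i == j) (fun i => nth 0 l i)).
rewrite leq_eqVlt; apply/orP; left; apply/eqP.
rewrite /index_iota !subn0.
transitivity (\sum_(i <- iota 0 (size l') | f (nth 0 Is i) == j) nth 0 l (nth 0 Is i)).
  rewrite [LHS]big_seq_cond [RHS]big_seq_cond; apply: eq_bigr => i /andP [Hi _].
  by rewrite El' (nth_map 0) // sIs; rewrite mem_iota in Hi.
rewrite -(big_map (nth 0 Is) (fun k => f k == j) (fun k => nth 0 l k)).
rewrite -sIs -/(mkseq _ _) mkseq_nth.
by apply: perm_big.
Qed.

Lemma embN_permr l m m' : embN l m -> perm_eq m m' -> embN l m'.
Proof.
case=> f [Hf H] ; rewrite perm_sym => /(perm_iotaP 0) [Js HJs Em'].
have sJs : size Js = size m' by rewrite Em' size_map.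
have inJs k : (k \in Js) = (k < size m) by rewrite (perm_mem HJs) mem_iota add0n.
have uJs : uniq Js by rewrite (perm_uniq HJs) iota_uniq.
exists (fun i => index (f i) Js); split.
  by move=> i Hi; rewrite -sJs index_mem inJs Hf.
move=> j Hj.
have HjJ : j < size Js by rewrite sJs.
have HJj : nth 0 Js j < size m by rewrite -inJs mem_nth.
rewrite Em' (nth_map 0) //.
apply: leq_trans (H _ HJj).
rewrite leq_eqVlt; apply/orP; left; apply/eqP; apply: eq_bigl => i.
apply/eqP/eqP => [<-|->]; first by rewrite nth_index // inJs Hf.
by rewrite index_uniq.
Qed.

Lemma sum_lt n (g : nat -> nat) (F : 'I_n -> nat) c z :
  (forall j, j < c -> \sum_(i < n | g i == j) F i <= z) ->
  \sum_(i < n | g i < c) F i <= c * z.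
Proof.
elim: c => [|c IH] H.
  by rewrite big_pred0 // => i; rewrite ltn0.
rewrite (bigID (fun i : 'I_n => g i < c)) /= mulSn [z + _]addnC.
apply: leq_add.
  rewrite (eq_bigl (fun i : 'I_n => g i < c)); last first.
    by move=> i /=; case: (ltnP (g i) c) => Hc; rewrite ?andbT ?andbF // ltnS ltnW.
  by apply: IH => j Hj; apply: H; rewrite ltnW.
rewrite (eq_bigl (fun i : 'I_n => g i == c)); first exact: H.
move=> i /=; rewrite ltnS leq_eqVlt -leqNgt.
by case: (ltngtP (g i) c) => //= ->.
Qed.

Lemma embN_step x l' y m' c z :
  embN l' (nseq c z ++ m') -> x + c * z <= y -> embN (x :: l') (y :: m').
Proof.
case=> f [Hf H] Hxy.
pose g i := if i is i'.+1 then (if f i' < c then 0 else (f i' - c).+1) else 0.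
exists g; split.
  case=> [|i] //= Hi; case: ifP => // /negbT; rewrite -leqNgt => Hc.
  move: (Hf i Hi); rewrite size_cat size_nseq => Hlt.
  by rewrite ltnS ltn_subLR.
case=> [|j] Hj /=.
  rewrite big_mkcond big_ord_recl /= -big_mkcond /=.
  rewrite (eq_bigl (fun i : 'I_(size l') => f i < c)); last first.
    by move=> i /=; rewrite add0n; case: ifP.
  apply: leq_trans Hxy; rewrite leq_add2l.
  apply: sum_lt => k Hk.
  have := H k; rewrite size_cat size_nseq nth_cat size_nseq Hk nth_nseq Hk.
  by apply; rewrite ltn_addr.
rewrite big_mkcond big_ord_recl /= -big_mkcond /= add0n.
rewrite (eq_bigl (fun i : 'I_(size l') => f i == c + j)); last first.
  move=> i /=; rewrite add0n; case: ifP => Hc; first by symmetry; apply/negbTE; rewrite neq_ltn ltn_addr.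
  by rewrite eqSS -(eqn_add2l c) subnKC // leqNgt Hc.
have := H (c + j); rewrite size_cat size_nseq ltn_add2l -ltnS => /(_ Hj).
by rewrite nth_cat size_nseq ltnNge leq_addr /= addKn.
Qed.
Lemma exists_max (s : seq nat) : s != [::] -> exists2 x, x \in s & forall z, z \in s -> z <= x.
Proof.
elim: s => // a s IH _.
case: s IH => [|b s] IH.
  by exists a; rewrite ?mem_seq1 // => z; rewrite mem_seq1 => /eqP ->.
case: IH => // x Hx Hmax.
case: (leqP a x) => Hax.
  exists x; first by rewrite in_cons Hx orbT.
  by move=> z; rewrite in_cons => /orP [/eqP ->|]; [|apply: Hmax].
exists a; first by rewrite in_cons eqxx.
move=> z; rewrite in_cons => /orP [/eqP ->//|/Hmax Hz].
by rewrite (leq_trans Hz) // ltnW.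
Qed.

Lemma S_nseq T c z : S T (nseq c z) = if T <= z then c * z else 0.
Proof. by rewrite /S big_nseq_cond iter_addn_0 mulnC. Qed.

Lemma S_zero T s : (forall z, z \in s -> z < T) -> S T s = 0.
Proof.
move=> H; rewrite /S big_hasC //; apply/hasPn => z /H; by rewrite ltnNge.
Qed.

Lemma suff_emb p (hp : 1 < p) n : forall l m, size l <= n ->
  (forall x, x \in l -> exists k, x = p ^ k) ->
  (forall y, y \in m -> exists k, y = p ^ k) ->
  (forall j, S (p ^ j) l <= S (p ^ j) m) -> embN l m.
Proof.
elim: n => [|n IH] l m Hs Hl Hm HS.
  case: l Hs Hl HS => // _ _ _.
  exists (fun _ => 0); split => // j _; rewrite big_ord0 //.
case: (altP (l =P [::])) => [->|Hne].
  exists (fun _ => 0); split => // j _; rewrite big_ord0 //.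
case: (exists_max Hne) => x Hx Hmax.
case: (Hl x Hx) => k Ex.
have Pl := perm_to_rem Hx.
have Hhas : has (fun y => p ^ k <= y) m.
  apply/negPn/negP => Hn.
  have H0 : S (p ^ k) m = 0.
    apply: S_zero => z Hz; rewrite ltnNge; apply/negP => H; move/negP: Hn; apply; apply/hasP; by exists z.
  have := HS k; rewrite H0 leqn0 (S_perm _ Pl) S_cons Ex leqnn.
  by rewrite addn_eq0 expn_eq0 andbC => /andP [_ /andP [/eqP Hp _]]; rewrite Hp in hp.
case/hasP: Hhas => y Hy Hky.
case: (Hm y Hy) => t Ey.
have Pm := perm_to_rem Hy.
have kt : k <= t by rewrite -(leq_exp2l _ _ hp) -Ey.
set c := p ^ (t - k) - 1.
have Hc : p ^ k + c * p ^ k = y.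
  rewrite Ey /c mulnBl mul1n -expnD subnK // addnC subnK //.
  by rewrite leq_pexp2l ?(ltnW hp).
have Pl' : perm_eq (x :: rem x l) l by rewrite perm_sym.
have Pm' : perm_eq (y :: rem y m) m by rewrite perm_sym.
apply: (embN_perml _ Pl').
apply: (embN_permr _ Pm').
apply: (embN_step (c := c) (z := p ^ k)); last by rewrite Ex Hc.
apply: IH.
- by move: Hs; rewrite size_rem //; case: (size l).
- by move=> z /mem_rem; apply: Hl.
- move=> z; rewrite mem_cat => /orP [/nseqP [-> _]|/mem_rem]; first by exists k.
  by apply: Hm.
move=> j.
rewrite S_cat S_nseq.
have := HS j; rewrite (S_perm _ Pl) (S_perm _ Pm) !S_cons.
case: (leqP j k) => Hjk.
  have Hjx : p ^ j <= x by rewrite Ex leq_exp2l.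
  have Hjy : p ^ j <= y by apply: leq_trans Hky; rewrite leq_exp2l.
  by rewrite Hjx Hjy leq_exp2l // Hjk -Hc -Ex -addnA leq_add2l.
move=> _; rewrite S_zero //.
move=> z /mem_rem /Hmax Hz; apply: (leq_ltn_trans Hz); rewrite Ex ltn_exp2l //.
Qed.

Definition F (p : nat) (n : seq nat) (T k : nat) := \sum_(y <- n | T <= p ^ k * y) p ^ k * y.
Definition Q (p : nat) (a n : seq nat) (T : nat) := \sum_(k < size a) nth 0 a k * F p n T k.

Lemma S_main p a n T : S T (pprod (ppart p a) n) = Q p a n T.
Proof. by rewrite S_pprod sum_ppart. Qed.

Lemma Q_widen p a n T N : size a <= N ->
  Q p a n T = \sum_(k < N) nth 0 a k * F p n T k.
Proof.
move=> HN; rewrite /Q (big_ord_widen _ (fun k => nth 0 a k * F p n T k) HN).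
rewrite big_mkcond /=; apply: eq_bigr => k _.
by case: ifP => // /negbT; rewrite -leqNgt => H; rewrite nth_default.
Qed.

Lemma Q_cancel p a n T i m N : m <= nth 0 a i -> size a <= N -> i < N ->
  Q p a n T = Q p (set_nth 0 a i (nth 0 a i - m)) n T + m * F p n T i.
Proof.
move=> Hm HN Hi.
have HN' : size (set_nth 0 a i (nth 0 a i - m)) <= N.
  by rewrite size_set_nth geq_max Hi HN.
rewrite (Q_widen _ _ _ HN) (Q_widen _ _ _ HN').
rewrite (bigD1 (Ordinal Hi)) // [X in _ = X + _](bigD1 (Ordinal Hi)) //=.
rewrite nth_set_nth /= eqxx -addnA [_ + m * _]addnC addnA -mulnDl subnK //.
congr (_ + _); apply: eq_bigr => k Hk.
by rewrite nth_set_nth /= ifN.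
Qed.

Lemma ppart_mem p a x : x \in ppart p a -> exists k, x = p ^ k.
Proof.
rewrite mem_sort => /flattenP [s /mapP [k _ ->] /nseqP [-> _]]; by exists k.
Qed.

Definition Good p a b := exists n : seq nat,
  [/\ forall y, y \in n -> exists k, y = p ^ k, n != [::] &
      forall j, Q p a n (p ^ j) <= Q p b n (p ^ j)].

Lemma F_perm p n n' T k : perm_eq n n' -> F p n T k = F p n' T k.
Proof. by move=> H; rewrite /F (perm_big _ H). Qed.

Lemma Q_perm p a n n' T : perm_eq n n' -> Q p a n T = Q p a n' T.
Proof. by move=> H; apply: eq_bigr => k _; rewrite (F_perm _ _ _ H). Qed.

Lemma pprod_mem p a n z : (forall y, y \in n -> exists k, y = p ^ k) ->
  z \in pprod (ppart p a) n -> exists k, z = p ^ k.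
Proof.
move=> Hn; rewrite mem_sort => /allpairsP [[x y] [/= /ppart_mem [k ->] /Hn [t ->] ->]].
by exists (k + t); rewrite expnD.
Qed.

Lemma good_stable p (hp : 1 < p) a b : Good p a b -> stably_embeds (ppart p a) (ppart p b).
Proof.
case=> n [Hn Hne HQ].
have Hn' : forall y, y \in sort geq n -> exists k, y = p ^ k.
  by move=> y; rewrite mem_sort; apply: Hn.
have Pn : perm_eq (sort geq n) n by rewrite perm_sort.
exists (sort geq n); split.
- apply/andP; split; first by apply: sort_sorted => x y; apply: leq_total.
  by apply/allP => y /Hn' [k ->]; rewrite expn_gt0 (ltnW hp).
- by rewrite -size_eq0 size_sort size_eq0.
apply: embN_embeds.
apply: (@suff_emb p hp (size (pprod (ppart p a) (sort geq n)))) => //.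
- by move=> x; apply: pprod_mem.
- by move=> x; apply: pprod_mem.
by move=> j; rewrite !S_main !(Q_perm _ _ _ Pn).
Qed.

Lemma stable_good p (hp : 1 < p) a b : stably_embeds (ppart p a) (ppart p b) -> Good p a b.
Proof.
case=> n0 [/andP [_ /allP Hpos] Hne Hemb].
have HS j : Q p a n0 (p ^ j) <= Q p b n0 (p ^ j).
  by rewrite -!S_main; apply: embeds_S.
pose e y := trunc_log p y.
pose E := \max_(y <- n0) e y.
pose n := flatten [seq nseq (y * p ^ (E - e y)) (p ^ (e y)) | y <- n0].
have HF j k : F p n (p ^ j) k = p ^ E * F p n0 (p ^ j) k.
  rewrite /F big_flatten big_map big_distrr /= [RHS]big_mkcond /=.
  rewrite big_seq [RHS]big_seq; apply: eq_bigr => y Hy.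
  have y0 : 0 < y by apply: Hpos.
  have eE : e y <= E by apply: (@leq_bigmax_seq _ n0 xpredT e y).
  have Hlo := trunc_logP hp y0; have Hhi := trunc_log_ltn y hp.
  rewrite big_nseq_cond iter_addn_0.
  have -> : (p ^ j <= p ^ k * p ^ e y) = (p ^ j <= p ^ k * y).
    apply/idP/idP => H.
      by apply: (leq_trans H); rewrite leq_mul2l Hlo orbT.
    rewrite -expnD leq_exp2l //.
    have : p ^ j < p ^ (k + (e y).+1).
      by apply: (leq_ltn_trans H); rewrite expnD ltn_mul2l expn_gt0 (ltnW hp).
    by rewrite ltn_exp2l // addnS ltnS.
  case: ifP => // _.
  rewrite -[in RHS](subnK eE) expnD.
  set u := p ^ k; set v := p ^ e y; set w := p ^ (E - e y).
  clearbody u v w; lia.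
have HQ j : Q p a n (p ^ j) = p ^ E * Q p a n0 (p ^ j).
  by rewrite /Q big_distrr /=; apply: eq_bigr => k _; rewrite HF mulnCA.
have HQb j : Q p b n (p ^ j) = p ^ E * Q p b n0 (p ^ j).
  by rewrite /Q big_distrr /=; apply: eq_bigr => k _; rewrite HF mulnCA.
exists n; split.
- move=> z /flattenP [s /mapP [y _ ->] /nseqP [-> _]]; by exists (e y).
- have [y0 Hy0] : exists y0, y0 \in n0.
    by case: (n0) Hne => // y r _; exists y; rewrite mem_head.
  have Hm : p ^ (e y0) \in n.
    apply/flattenP; exists (nseq (y0 * p ^ (E - e y0)) (p ^ (e y0))).
      by apply: map_f.
    by apply/nseqP; split => //; rewrite muln_gt0 Hpos // expn_gt0 (ltnW hp).
  by apply/negP => /eqP E0; rewrite E0 in Hm.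
by move=> j; rewrite HQ HQb leq_pmul2l ?expn_gt0 ?(ltnW hp).
Qed.

Theorem corollary3p4 (p : nat) (hp : 2 <= p) (a b : seq nat) (i : nat) :
  let m := minn (nth 0 a i) (nth 0 b i) in
  stably_embeds (ppart p a) (ppart p b) <->
  stably_embeds (ppart p (set_nth 0 a i (nth 0 a i - m)))
                (ppart p (set_nth 0 b i (nth 0 b i - m))).
Proof.
move=> m.
set a' := set_nth 0 a i _; set b' := set_nth 0 b i _.
set N := maxn (maxn (size a) (size b)) i.+1.
have HaN : size a <= N by rewrite /N !leq_max leqnn.
have HbN : size b <= N by rewrite /N !leq_max leqnn orbT.
have HiN : i < N by rewrite /N !leq_max leqnn orbT.
have Eq n T : (Q p a n T <= Q p b n T) = (Q p a' n T <= Q p b' n T).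
  rewrite (Q_cancel p n T (m := m) (i := i) (N := N)) ?geq_minl //.
  rewrite [Q p b n T](Q_cancel p n T (m := m) (i := i) (N := N)) ?geq_minr //.
  by rewrite leq_add2r.
split => /(stable_good hp) [n [H1 H2 H3]]; apply: (good_stable hp); exists n; split => // j.
  by rewrite -Eq.
by rewrite Eq.
Qed.
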